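(* Let $f_1,\dots,f_d:\mathbb{R}^m\times\mathbb{R}^m\to\mathscr I^{p,q}$ be functions whose values $f_1(\vec x,\vec u),\dots,f_d(\vec x,\vec u)$ are, for every $(\vec x,\vec u)$, mutually coorthogonal blades. For each $l$ let $g_l$ be one of the four maps $\mathscr I^{p,q}\to\mathcal{G}^{p,q}$: $g(h)=e^{h}$, $g(h)=\cos(|h|)$, $g(h)=\frac{h}{|h|}\sin(|h|)$, or $g(h)=0$, where $|h|=\sqrt{-h^2}$. Then for every $\vec{A}\in\mathcal{G}^{p,q}$ and all $\vec x,\vec u\in\mathbb{R}^m$, $$\prod_{l=1}^{d}g_l\big(-f_l(\vec{x},\vec{u})\big)\,\vec{A}=\sum_{\vec{j}\in\{0,1\}^d}\vec{A}_{\vec c^{\vec{j}}(f_1(\vec x,\vec u),\dots,f_d(\vec x,\vec u))}\prod_{l=1}^{d}g_l\big(-(-1)^{j_l}f_l(\vec{x},\vec{u})\big),$$ where the products are ordered with $l$ increasing from left to right.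
   Context: $\mathcal{G}^{p,q}$ is the real geometric algebra of $\mathbb{R}^{p,q}$; $\mathscr I^{p,q}=\{i\in\mathcal{G}^{p,q}: i^2\in\mathbb{R},\ i^2<0\}$ (all such elements are invertible); $e^X=\sum_r X^r/r!$. Blades $\vec A,\vec B$ are coorthogonal if $\vec A\vec B=\pm\vec B\vec A$. For invertible $\vec B$: $\vec{A}_{\vec c^0(\vec{B})}=\frac12(\vec{A}+\vec{B}^{-1}\vec{A}\vec{B})$, $\vec{A}_{\vec c^1(\vec{B})}=\frac12(\vec{A}-\vec{B}^{-1}\vec{A}\vec{B})$, and for invertible $\vec B_1,\dots,\vec B_d$ and $\vec j\in\{0,1\}^d$: $\vec{A}_{\vec c^{\vec{j}}(\vec B_1,\dots,\vec B_d)}=((\vec{A}_{\vec c^{j_1}(\vec{B}_1)})_{\vec c^{j_2}(\vec{B}_2)}\cdots)_{\vec c^{j_d}(\vec{B}_d)}$ (for mutually coorthogonal invertible blades this does not depend on the order). *)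

(* Defs.v *)
From HB Require Import structures.
From mathcomp Require Import all_boot all_order all_algebra.
From mathcomp Require Import boolp classical_sets reals topology normedtype sequences trigo.
Set Implicit Arguments. Unset Strict Implicit. Unset Printing Implicit Defensive.
Import Order.TTheory GRing.Theory Num.Theory.
Import numFieldNormedType.Exports.
Local Open Scope ring_scope.

(** Real geometric algebra G^{p,q} of R^{p,q}: basis blades e_A, A ⊆ {0..p+q-1},
    with e_i^2 = +1 for i < p and e_i^2 = -1 for p <= i < p+q. *)
Notation GA R p q := {ffun {set 'I_(p + q)} -> R}.

Section GA.
Variables (R : realType) (p q : nat).
Local Notation n := (p + q)%N.

Local Notation GA := {ffun {set 'I_n} -> R}.

(** sign of e_A e_B = bsign A B * e_{A Δ B} *)
Definition bsign (A B : {set 'I_n}) : R :=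
  (-1) ^+ #|[set ab : 'I_n * 'I_n | [&& ab.1 \in A, ab.2 \in B & (ab.2 < ab.1)%N]]|
  * \prod_(i in A :&: B) (if (i < p)%N then 1 else -1).

Definition symdiff (A B : {set 'I_n}) := (A :\: B) :|: (B :\: A).

Definition gmul (x y : GA) : GA :=
  [ffun C => \sum_(A : {set 'I_n}) \sum_(B : {set 'I_n} | symdiff A B == C)
               bsign A B * x A * y B].

Definition gwedge (x y : GA) : GA :=
  [ffun C => \sum_(A : {set 'I_n}) \sum_(B : {set 'I_n} | (A :&: B == finset.set0) && (A :|: B == C))
               bsign A B * x A * y B].

Definition gscale (c : R) (x : GA) : GA := [ffun A => c * x A].

Definition gsc (c : R) : GA := [ffun A => if A == finset.set0 then c else 0].
Definition gone : GA := gsc 1.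

Definition gpow (x : GA) (r : nat) : GA := iter r (gmul x) gone.

(** e^X = sum_r X^r / r!, the limit being taken coordinatewise
    (equivalent to convergence in the finite-dimensional space GA) *)
Definition gexp (X : GA) : GA :=
  [ffun A => limn (fun N : nat => ((\sum_(r < N) gscale (r`!%:R)^-1 (gpow X r) : GA) A : R))].

Definition is_vector (v : GA) : Prop := forall A : {set 'I_n}, #|A| != 1%N -> v A = 0.

Definition is_blade (B : GA) : Prop :=
  exists (a : R) (vs : seq GA), (forall v, v \in vs -> is_vector v) /\
    B = gscale a (foldr gwedge gone vs).

Definition coorthogonal (A B : GA) : Prop :=
  gmul A B = gmul B A \/ gmul A B = - gmul B A.

Definition in_I (i : GA) : Prop := exists c : R, gmul i i = gsc c /\ c < 0.

(** inverse (meaningful for invertible elements) *)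
Definition ginv (x : GA) : GA :=
  xget 0 (fun y : GA => gmul x y = gone /\ gmul y x = gone).

(** A_{c^0(B)} (b = false) and A_{c^1(B)} (b = true) *)
Definition cproj (b : bool) (B A : GA) : GA :=
  gscale (2%:R)^-1 (A + (if b then - gmul (gmul (ginv B) A) B else gmul (gmul (ginv B) A) B)).

(** A_{c^j(B_1,...,B_d)} = ((A_{c^{j_1}(B_1)})_{c^{j_2}(B_2)} ...)_{c^{j_d}(B_d)} *)
Definition cproj_multi (d : nat) (j : {ffun 'I_d -> bool}) (Bs : 'I_d -> GA) (A : GA) : GA :=
  foldl (fun X l => cproj (j l) (Bs l) X) A (enum 'I_d).

(** |h| = sqrt(-h^2), h^2 being a scalar for h in I^{p,q} *)
Definition gabs (h : GA) : R := Num.sqrt (- (gmul h h) finset.set0).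

Inductive gkind := GExp | GCos | GSin | GZero.

Definition gfun (k : gkind) (h : GA) : GA :=
  match k with
  | GExp => gexp h
  | GCos => gsc (cos (gabs h))
  | GSin => gscale (sin (gabs h) / gabs h) h
  | GZero => 0
  end.

Definition gprod (d : nat) (F : 'I_d -> GA) : GA := \big[gmul/gone]_(l < d) F l.

End GA.

(* Main.v *)
Require Import Defs.
From HB Require Import structures.
From mathcomp Require Import all_boot all_order all_algebra.
From mathcomp Require Import ring.
From mathcomp Require Import boolp classical_sets reals topology normedtype sequences trigo.
Import Order.TTheory GRing.Theory Num.Theory.
Import numFieldNormedType.Exports.
Local Open Scope ring_scope.

Section Alg.
Variables (R : realType) (p q : nat).
Local Notation n := (p + q)%N.
Local Notation GA := {ffun {set 'I_n} -> R}.
Local Notation sd := (@symdiff p q).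
Local Notation bs := (@bsign R p q).

Lemma sdK (A B : {set 'I_n}) : sd A (sd A B) = B.
Proof. apply/setP => x; rewrite /symdiff !inE; by case: (x \in A); case: (x \in B). Qed.
Lemma sdC (A B : {set 'I_n}) : sd A B = sd B A.
Proof. apply/setP => x; rewrite /symdiff !inE; by case: (x \in A); case: (x \in B). Qed.
Lemma sdA (A B C : {set 'I_n}) : sd A (sd B C) = sd (sd A B) C.
Proof. apply/setP => x; rewrite /symdiff !inE; by case: (x \in A); case: (x \in B); case: (x \in C). Qed.
Lemma sd0 (A : {set 'I_n}) : sd finset.set0 A = A.
Proof. apply/setP => x; rewrite /symdiff !inE; by case: (x \in A). Qed.
Lemma sdv (A : {set 'I_n}) : sd A A = finset.set0.
Proof. apply/setP => x; rewrite /symdiff !inE; by case: (x \in A). Qed.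
Lemma sd_eq (A B C : {set 'I_n}) : (sd A B == C) = (B == sd A C).
Proof. by apply/eqP/eqP => [<-|->]; rewrite sdK. Qed.

Definition sgm (i : 'I_n) : R := if (i < p)%N then 1 else -1.
Definition tau (i j : 'I_n) : R :=
  (if (j < i)%N then -1 else 1) * (if i == j then sgm i else 1).

Lemma tau2 i j : tau i j * tau i j = 1.
Proof.
rewrite /tau /sgm mulrACA.
have H : forall b : bool, (if b then -1 else 1) * (if b then -1 else 1) = 1 :> R.
  by case; rewrite ?mulrNN mulr1.
rewrite H mul1r; case: (i == j) => //; last by rewrite mulr1.
by case: (i < p)%N; rewrite ?mulrNN mulr1.
Qed.

Lemma prod_if1 (B : {set 'I_n}) i (a : R) :
  \prod_(j in B) (if i == j then a else 1) = if i \in B then a else 1.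
Proof.
case: (boolP (i \in B)) => iB.
  rewrite (bigD1 i) //= eqxx big1 ?mulr1 // => j /andP[_ /negPf].
  by rewrite eq_sym => ->.
apply: big1 => j jB; case: eqP => // eij; by rewrite eij jB in iB.
Qed.

Lemma bsignE (A B : {set 'I_n}) :
  bs A B = \prod_(i in A) \prod_(j in B) tau i j.
Proof.
rewrite /bsign /tau.
under [RHS]eq_bigr => i _ do rewrite big_split /=.
rewrite big_split /=; congr (_ * _).
  have -> : forall (S : {set 'I_n * 'I_n}), (-1:R) ^+ #|S| = \prod_(ij in S) (-1).
    by move=> S; rewrite prodr_const.
  rewrite [RHS]pair_big_dep /= [RHS]big_mkcond /= [LHS]big_mkcond /=.
  apply: eq_bigr => ij _; rewrite !inE andbA.
  by case: ((ij.1 \in A) && (ij.2 \in B))...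
rewrite [LHS](eq_bigl (fun i => (i \in A) && (i \in B))); last by move=> i; rewrite inE.
rewrite big_mkcondr /=; apply: eq_bigr => i _.
by rewrite prod_if1 /sgm.
Qed.

Lemma prod_sd (X Y : {set 'I_n}) (f : 'I_n -> R) :
  (forall i, f i * f i = 1) ->
  \prod_(i in sd X Y) f i = \prod_(i in X) f i * \prod_(i in Y) f i.
Proof.
move=> f2.
rewrite [in RHS](big_setID (A:=X) Y) [in RHS](big_setID (A:=Y) X) /symdiff.
rewrite (eq_bigl [predU (X :\: Y) & (Y :\: X)]); last by move=> x; rewrite !inE.
rewrite bigU /=; last first.
  apply/pred0P => x /=; rewrite !inE.
  by case: (x \in X); case: (x \in Y).
rewrite finset.setIC mulrACA -big_split /=.
by rewrite [\prod_(i in Y :&: X) _]big1 ?mul1r // => i _; exact: f2.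
Qed.

Lemma bs_sdl A B C : bs (sd A B) C = bs A C * bs B C.
Proof.
rewrite !bsignE prod_sd // => i; rewrite -big_split; apply: big1 => j _; exact: tau2.
Qed.

Lemma bs_sdr A B C : bs A (sd B C) = bs A B * bs A C.
Proof.
rewrite !bsignE -big_split; apply: eq_bigr => i _; rewrite prod_sd // => j; exact: tau2.
Qed.

Lemma bs0l C : bs finset.set0 C = 1.
Proof. by rewrite bsignE big_set0. Qed.
Lemma bs0r C : bs C finset.set0 = 1.
Proof. by rewrite bsignE; apply: big1 => i _; rewrite big_set0. Qed.

Lemma gmulE (x y : GA) C :
  gmul x y C = \sum_A bs A (sd A C) * x A * y (sd A C).
Proof.
rewrite /gmul ffunE; apply: eq_bigr => A _.
rewrite (eq_bigl (pred1 (sd A C))); last by move=> B; rewrite /= sd_eq.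
by rewrite big_pred1_eq.
Qed.

Lemma gmulA (x y z : GA) : gmul (gmul x y) z = gmul x (gmul y z).
Proof.
apply/ffunP => D; rewrite !gmulE.
under eq_bigr => C _ do rewrite gmulE mulr_sumr mulr_suml.
rewrite exchange_big /=; apply: eq_bigr => A _.
rewrite (reindex_inj (h := sd A)); last by move=> B1 B2 /(congr1 (sd A)); rewrite !sdK.
rewrite gmulE mulr_sumr; apply: eq_bigr => B _; rewrite !sdK.
have eBD : sd B (sd A D) = sd (sd A B) D by rewrite sdA (sdC B A).
rewrite eBD; set E := sd (sd A B) D.
have eAD : sd A D = sd B E by rewrite /E sdA (sdC A B) sdK.
rewrite eAD bs_sdl bs_sdr; ring.
Qed.

Local Notation "c *g x" := (gscale c x) (at level 40).
Lemma scale1g (x : GA) : 1 *g x = x.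
Proof. by apply/ffunP => A; rewrite !ffunE mul1r. Qed.
Lemma scale0g (x : GA) : 0 *g x = 0.
Proof. by apply/ffunP => A; rewrite !ffunE mul0r. Qed.
Lemma scaleN1g (x : GA) : (-1) *g x = - x.
Proof. by apply/ffunP => A; rewrite !ffunE mulN1r. Qed.
Lemma scaleNg c (x : GA) : (- c) *g x = - (c *g x).
Proof. by apply/ffunP => A; rewrite !ffunE mulNr. Qed.
Lemma scalegN c (x : GA) : c *g (- x) = - (c *g x).
Proof. by apply/ffunP => A; rewrite !ffunE mulrN. Qed.
Lemma scalegA a b (x : GA) : a *g (b *g x) = (a * b) *g x.
Proof. by apply/ffunP => A; rewrite !ffunE mulrA. Qed.
Lemma scalegDr a (x y : GA) : a *g (x + y) = a *g x + a *g y.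
Proof. by apply/ffunP => A; rewrite !ffunE mulrDr. Qed.
Lemma scalegDl a b (x : GA) : (a + b) *g x = a *g x + b *g x.
Proof. by apply/ffunP => A; rewrite !ffunE mulrDl. Qed.
Lemma scaleg0 a : a *g (0 : GA) = 0.
Proof. by apply/ffunP => A; rewrite !ffunE mulr0. Qed.
Lemma scaleg_sum a I (r : seq I) (P : pred I) (F : I -> GA) :
  a *g (\sum_(i <- r | P i) F i) = \sum_(i <- r | P i) a *g F i.
Proof. exact: (big_morph (gscale a) (scalegDr a) (scaleg0 a)). Qed.

Lemma gmulDl (x y z : GA) : gmul (x + y) z = gmul x z + gmul y z.
Proof.
apply/ffunP => C; rewrite [LHS]gmulE ffunE !gmulE -big_split; apply: eq_bigr => A _.
by rewrite ffunE /=; ring.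
Qed.
Lemma gmulDr (x y z : GA) : gmul x (y + z) = gmul x y + gmul x z.
Proof.
apply/ffunP => C; rewrite [LHS]gmulE ffunE !gmulE -big_split; apply: eq_bigr => A _.
by rewrite ffunE /=; ring.
Qed.
Lemma gmulZl c (x y : GA) : gmul (c *g x) y = c *g gmul x y.
Proof.
apply/ffunP => C; rewrite [LHS]gmulE ffunE gmulE mulr_sumr; apply: eq_bigr => A _.
by rewrite ffunE /=; ring.
Qed.
Lemma gmulZr c (x y : GA) : gmul x (c *g y) = c *g gmul x y.
Proof.
apply/ffunP => C; rewrite [LHS]gmulE ffunE gmulE mulr_sumr; apply: eq_bigr => A _.
by rewrite ffunE /=; ring.
Qed.
Lemma gmul0l (x : GA) : gmul 0 x = 0.
Proof. by apply/ffunP => C; rewrite gmulE ffunE big1 // => A _; rewrite ffunE /=; ring. Qed.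
Lemma gmul0r (x : GA) : gmul x 0 = 0.
Proof. by apply/ffunP => C; rewrite gmulE ffunE big1 // => A _; rewrite ffunE /=; ring. Qed.
Lemma gmulNl (x y : GA) : gmul (- x) y = - gmul x y.
Proof. by rewrite -scaleN1g gmulZl scaleN1g. Qed.
Lemma gmulNr (x y : GA) : gmul x (- y) = - gmul x y.
Proof. by rewrite -scaleN1g gmulZr scaleN1g. Qed.

Lemma gmul_suml I (r : seq I) (P : pred I) (F : I -> GA) (y : GA) :
  gmul (\sum_(i <- r | P i) F i) y = \sum_(i <- r | P i) gmul (F i) y.
Proof. exact: (big_morph (fun x => gmul x y) (fun a b => gmulDl a b y) (gmul0l y)). Qed.
Lemma gmul_sumr I (r : seq I) (P : pred I) (F : I -> GA) (y : GA) :
  gmul y (\sum_(i <- r | P i) F i) = \sum_(i <- r | P i) gmul y (F i).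
Proof. exact: (big_morph (fun x => gmul y x) (fun a b => gmulDr y a b) (gmul0r y)). Qed.

Lemma gmulscl c (x : GA) : gmul (gsc p q c) x = c *g x.
Proof.
apply/ffunP => C; rewrite gmulE ffunE (bigD1 finset.set0) //= big1 ?addr0.
  by rewrite ffunE eqxx sd0 bs0l; ring.
by move=> A /negPf nA; rewrite ffunE nA; ring.
Qed.
Lemma gmulscr c (x : GA) : gmul x (gsc p q c) = c *g x.
Proof.
apply/ffunP => C; rewrite gmulE ffunE (bigD1 C) //= big1 ?addr0.
  by rewrite ffunE sdv eqxx bs0r; ring.
move=> A nAC; rewrite ffunE.
have -> : (sd A C == finset.set0) = false.
  by apply/negbTE; apply: contra nAC => /eqP h; rewrite -(sdK A C) h /symdiff finset.setD0 finset.set0D finset.setU0.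
ring.
Qed.
Lemma gmul1l (x : GA) : gmul (gone R p q) x = x.
Proof. by rewrite /gone gmulscl scale1g. Qed.
Lemma gmul1r (x : GA) : gmul x (gone R p q) = x.
Proof. by rewrite /gone gmulscr scale1g. Qed.
Lemma gscZ (a c : R) : a *g gsc p q c = gsc p q (a * c).
Proof. by apply/ffunP => A; rewrite !ffunE; case: (_ == _); ring. Qed.

Lemma ginvE (B : GA) c : gmul B B = gsc p q c -> c != 0 -> ginv B = c^-1 *g B.
Proof.
move=> BB c0.
have h1 : gmul B (c^-1 *g B) = gone R p q by rewrite gmulZr BB gscZ mulVf.
have h2 : gmul (c^-1 *g B) B = gone R p q by rewrite gmulZl BB gscZ mulVf.
have := @xgetI _ 0 (fun y : GA => gmul B y = gone R p q /\ gmul y B = gone R p q) (c^-1 *g B) (conj h1 h2).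
rewrite -/(ginv B); case=> _ yB.
by rewrite -(gmul1r (ginv B)) -h1 -gmulA yB gmul1l.
Qed.

Lemma addgE (x y : GA) C : (x + y) C = x C + y C. Proof. by rewrite ffunE. Qed.
Lemma oppgE (x : GA) C : (- x) C = - x C. Proof. by rewrite ffunE. Qed.
Lemma scalegE a (x : GA) C : (a *g x) C = a * x C. Proof. by rewrite ffunE. Qed.
Lemma zerogE C : (0 : GA) C = 0. Proof. by rewrite ffunE. Qed.

Ltac gnorm := rewrite ?(gmulDl, gmulDr, gmulZl, gmulZr, gmulNl, gmulNr, gmulA, gmul0l, gmul0r).
Ltac gfield c0 := apply/ffunP => ?; rewrite ?(addgE, oppgE, scalegE, zerogE) /=; field; try exact: c0.
Ltac gfin := apply/ffunP => ?; rewrite ?(addgE, oppgE, scalegE, zerogE) /=; ring.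

Definition sg (b : bool) : R := (-1) ^+ b.
Lemma sg2 b : sg b * sg b = 1.
Proof. by case: b; rewrite /sg /= ?expr1 ?expr0 ?mulrNN mulr1. Qed.

Section Proj.
Variables (B : GA) (c : R).
Hypothesis BB : gmul B B = gsc p q c.
Hypothesis c0 : c != 0.

Lemma gBB Z : gmul B (gmul B Z) = c *g Z.
Proof. by rewrite -gmulA BB gmulscl. Qed.
Lemma gBB' Z : gmul Z (gmul B B) = c *g Z.
Proof. by rewrite BB gmulscr. Qed.

Lemma cprojE b X : cproj b B X = 2^-1 *g (X + (sg b * c^-1) *g gmul B (gmul X B)).
Proof.
rewrite /cproj (ginvE _ _ BB c0) gmulZl gmulZl gmulA; case: b; rewrite /sg /=; gfin.
Qed.

Lemma cproj_comm b X : gmul B (cproj b B X) = sg b *g gmul (cproj b B X) B.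
Proof.
rewrite cprojE; gnorm; rewrite gBB gBB'; gnorm.
case: b; rewrite /sg /=; apply/ffunP => C; rewrite ?(addgE, oppgE, scalegE, zerogE) /=; field; exact: c0.
Qed.

Lemma cproj_sum X : cproj false B X + cproj true B X = X.
Proof. rewrite !cprojE /sg /=; gfield c0. Qed.

Lemma cproj_pres (B' : GA) bt bs b X :
  gmul B' B = sg bt *g gmul B B' -> gmul B' X = sg bs *g gmul X B' ->
  gmul B' (cproj b B X) = sg bs *g gmul (cproj b B X) B'.
Proof.
move=> hB hX.
have hBZ Z : gmul B' (gmul B Z) = sg bt *g gmul B (gmul B' Z) by rewrite -gmulA hB gmulZl gmulA.
have hXZ Z : gmul B' (gmul X Z) = sg bs *g gmul X (gmul B' Z) by rewrite -gmulA hX gmulZl gmulA.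
rewrite cprojE; gnorm; rewrite hBZ; gnorm; rewrite hXZ; gnorm; rewrite hB; gnorm; rewrite hX; gnorm.
clear hBZ hXZ hB hX.
by case: bt; case: bs; case: b; rewrite /sg /=; gfield c0.
Qed.
End Proj.

Section Multi.
Variables (d : nat) (Bs : 'I_d -> GA) (cs : 'I_d -> R).
Hypothesis BBs : forall l, gmul (Bs l) (Bs l) = gsc p q (cs l).
Hypothesis cs0 : forall l, cs l != 0.
Hypothesis coo : forall l l', exists bt, gmul (Bs l) (Bs l') = sg bt *g gmul (Bs l') (Bs l).

Definition Pf (j : {ffun 'I_d -> bool}) (s : seq 'I_d) (X : GA) :=
  foldl (fun X l => cproj (j l) (Bs l) X) X s.

Definition relj j l (Y : GA) := gmul (Bs l) Y = sg (j l) *g gmul Y (Bs l).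

Lemma Pf_rel (j : {ffun 'I_d -> bool}) (s : seq 'I_d) : forall X (Q : pred 'I_d), (forall l, Q l -> relj j l X) ->
  forall l, Q l || (l \in s) -> relj j l (Pf j s X).
Proof.
elim: s => [|a s IH] X Q hQ l.
  by rewrite in_nil orbF; apply: hQ.
move=> hl; rewrite /Pf /=.
apply: (IH _ [pred k | Q k || (k == a)]).
  move=> k /orP[Qk|/eqP->].
    have [bt hbt] := coo k a.
    exact: (cproj_pres _ _ (BBs a) (cs0 a) _ _ _ _ _ hbt (hQ k Qk)).
  exact: (cproj_comm _ _ (BBs a) (cs0 a)).
by move: hl; rewrite in_cons orbA.
Qed.

Lemma Pf_eq (s : seq 'I_d) (j j' : {ffun 'I_d -> bool}) X : {in s, j =1 j'} -> Pf j s X = Pf j' s X.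
Proof.
elim: s X => [|a s IH] X //= hj.
rewrite /Pf /= hj ?mem_head //; apply: IH => k ks; apply: hj; by rewrite inE ks orbT.
Qed.

Lemma scalegMn k (X : GA) : k%:R *g X = X *+ k.
Proof.
elim: k => [|k IH]; first by rewrite scale0g mulr0n.
by rewrite mulrS scalegDl IH scale1g mulrS.
Qed.

Definition flipf (l : 'I_d) (j : {ffun 'I_d -> bool}) : {ffun 'I_d -> bool} :=
  [ffun k => if k == l then ~~ j k else j k].
Lemma flipfK l : involutive (flipf l).
Proof. move=> j; apply/ffunP => k; rewrite !ffunE; case: (k == l) => //; exact: negbK. Qed.

Lemma Pf_sum (s : seq 'I_d) : uniq s -> forall X,
  \sum_(j : {ffun 'I_d -> bool}) Pf j s X = (2 ^ (d - size s))%:R *g X.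
Proof.
elim/last_ind: s => [_ X|s l IH].
  rewrite /Pf /= sumr_const card_ffun card_bool card_ord subn0 scalegMn //.
rewrite rcons_uniq => /andP[ls us] X.
have sz : (size s < d)%N.
  have := max_card (mem (rcons s l)).
  by rewrite card_ord (card_uniqP _) ?size_rcons // rcons_uniq ls us.
rewrite /Pf.
under eq_bigr => j _ do rewrite foldl_rcons -/(Pf j s X).
set F := fun j : {ffun 'I_d -> bool} => cproj (j l) (Bs l) (Pf j s X).
have eF : \sum_j F j = \sum_j F (flipf l j).
  apply: reindex_inj; exact: (can_inj (flipfK l)).
have -> : \sum_j F j = 2^-1 *g (\sum_j F j + \sum_j F j).
  by gfield (2 != 0 :> R).
rewrite [X in _ + X]eF -big_split /=.
rewrite (eq_bigr (fun j => Pf j s X)); last first.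
  move=> j _; rewrite /F (@Pf_eq s (flipf l j) j); last first.
    move=> k ks; rewrite ffunE; case: eqP => // kl; by move: ks; rewrite kl (negPf ls).
  rewrite ffunE eqxx; case: (j l); rewrite ?(cproj_sum _ _ (BBs l) (cs0 l)) //.
  by rewrite addrC (cproj_sum _ _ (BBs l) (cs0 l)).
rewrite IH // scalegA size_rcons.
have -> : (d - size s)%N = (d - (size s).+1).+1 by rewrite subnSK.
by rewrite expnS natrM mulrA mulVf ?mul1r // pnatr_eq0.
Qed.
End Multi.

Lemma push k (F F' : 'I_k -> GA) X : (forall l, gmul (F l) X = gmul X (F' l)) ->
  gmul (\big[@gmul R p q/gone R p q]_(l < k) F l) X = gmul X (\big[@gmul R p q/gone R p q]_(l < k) F' l).
Proof.
elim: k F F' => [|k IH] F F' hF; first by rewrite !big_ord0 gmul1l gmul1r.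
rewrite !big_ord_recl gmulA (IH _ (fun l => F' (lift ord0 l))); last by move=> l; exact: hF.
by rewrite -gmulA hF gmulA.
Qed.

Definition ce (c : R) (r : nat) : R := if odd r then 0 else c ^+ r./2.
Definition co (c : R) (r : nat) : R := if odd r then c ^+ r./2 else 0.

Lemma gpowE (h : GA) c : gmul h h = gsc p q c -> forall r,
  gpow h r = gsc p q (ce c r) + co c r *g h.
Proof.
move=> hh; elim => [|r IH].
  rewrite /gpow /= /ce /co /= scale0g addr0 //.
rewrite /gpow iterS -/(gpow h r) IH gmulDr gmulscr gmulZr hh /ce /co /=.
rewrite uphalf_half; case: (odd r) => /=.
  rewrite add1n exprS scale0g addr0 add0r gscZ mulrC //.
by rewrite add0n gscZ mul0r addrC.
Qed.

Lemma ce_cos (c : R) : c < 0 -> forall k,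
  ce c k / k`!%:R = cos_coeff (Num.sqrt (- c)) k.
Proof.
move=> cn k; rewrite /ce /cos_coeff /= -exprnP.
case: (boolP (odd k)) => ok /=; first by rewrite !mul0r.
have hk : k = (k./2).*2 by rewrite -{1}(odd_double_half k) (negPf ok).
have -> : Num.sqrt (- c) ^+ k = (- c) ^+ k./2.
  by rewrite {1}hk -mul2n exprM sqr_sqrtr ?oppr_ge0 ?ltW.
by rewrite mul1r -exprMn mulN1r opprK.
Qed.

Lemma co_sin (c : R) : c < 0 -> forall k,
  Num.sqrt (- c) * (co c k / k`!%:R) = sin_coeff (Num.sqrt (- c)) k.
Proof.
move=> cn k; rewrite /co /sin_coeff /=.
case: (boolP (odd k)) => ok /=; last by rewrite !mul0r mulr0.
have hk : k = (k./2).*2.+1 by rewrite -{1}(odd_double_half k) ok.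
have -> : k.-1./2 = k./2 by rewrite {1}hk /= doubleK.
have -> : Num.sqrt (- c) ^+ k = Num.sqrt (- c) * (- c) ^+ k./2.
  by rewrite {1}hk exprS -mul2n exprM sqr_sqrtr ?oppr_ge0 ?ltW.
rewrite mul1r; have -> : c ^+ k./2 = (-1) ^+ k./2 * (- c) ^+ k./2.
  by rewrite -exprMn mulN1r opprK.
ring.
Qed.

Definition Ec (c : R) : R := limn (series (cos_coeff (Num.sqrt (- c)))).
Definition Oc (c : R) : R := (Num.sqrt (- c))^-1 * limn (series (sin_coeff (Num.sqrt (- c)))).

Lemma gexpE (h : GA) c : gmul h h = gsc p q c -> c < 0 ->
  gexp h = gsc p q (Ec c) + Oc c *g h.
Proof.
move=> hh cn; apply/ffunP => A; rewrite /gexp ffunE addgE scalegE.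
set dl := gsc p q (1 : R) A.
have gscA e : gsc p q e A = e * dl by rewrite /dl !ffunE; case: (_ == _); ring.
set a := Num.sqrt (- c).
have a0 : a != 0 by rewrite sqrtr_eq0 -ltNge oppr_gt0.
have eq1 : (fun N : nat => (\sum_(r < N) gscale (r`!%:R)^-1 (gpow h r)) A) =
   (fun N => series (cos_coeff a) N * dl + (a^-1 * series (sin_coeff a) N) * h A).
  apply/funext => N; rewrite sum_ffunE /series /= big_mkord.
  rewrite big_distrl /= big_distrr /= big_distrl /= big_mkord -big_split /=.
  apply: eq_bigr => r _; rewrite scalegE (gpowE _ _ hh) addgE scalegE gscA.
  rewrite -(ce_cos _ cn) -(co_sin _ cn) -/a; field.
  by rewrite a0 /= pnatr_eq0 -lt0n fact_gt0.
rewrite eq1 gscA.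
apply: cvg_lim; first exact: Rhausdorff.
apply: cvgD.
  apply: cvgMr_tmp; exact: is_cvg_series_cos_coeff.
apply: cvgMr_tmp; apply: cvgMl_tmp; exact: is_cvg_series_sin_coeff.
Qed.

Lemma swap (B X : GA) c b k : gmul B B = gsc p q c -> c < 0 ->
  gmul B X = sg b *g gmul X B ->
  gmul (gfun k (- B)) X = gmul X (gfun k (- gscale (sg b) B)).
Proof.
move=> BB cn hX.
have hsq : gmul (- B) (- B) = gsc p q c by rewrite gmulNl gmulNr opprK BB.
have hsq' : gmul (- (sg b *g B)) (- (sg b *g B)) = gsc p q c.
  by rewrite gmulNl gmulNr opprK gmulZl gmulZr scalegA sg2 scale1g BB.
have ga : gabs (- B) = gabs (- (sg b *g B)) by rewrite /gabs hsq hsq'.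
case: k => /=.
- rewrite (gexpE _ _ hsq cn) (gexpE _ _ hsq' cn); gnorm.
  rewrite gmulscl gmulscr hX; gnorm; gfin.
- by rewrite ga gmulscl gmulscr.
- rewrite ga; gnorm; rewrite hX; gnorm; gfin.
- by rewrite gmul0l gmul0r.
Qed.
End Alg.

Theorem lemma4p7 (R : realType) (p q m d : nat)
    (f : 'I_d -> 'rV[R]_m -> 'rV[R]_m -> GA R p q)
    (g : 'I_d -> gkind)
    (hI : forall l x u, in_I (f l x u))
    (hblade : forall l x u, is_blade (f l x u))
    (hcoorth : forall l l' x u, coorthogonal (f l x u) (f l' x u)) :
  forall (A : GA R p q) (x u : 'rV[R]_m),
    gmul (gprod (fun l => gfun (g l) (- f l x u))) A =
    \sum_(j : {ffun 'I_d -> bool})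
       gmul (cproj_multi j (fun l => f l x u) A)
            (gprod (fun l => gfun (g l) (- gscale ((-1) ^+ nat_of_bool (j l)) (f l x u)))).
Proof.
move=> A x u.
set Bs := fun l => f l x u.
pose cs := fun l => gmul (Bs l) (Bs l) finset.set0.
have BBs : forall l, gmul (Bs l) (Bs l) = gsc p q (cs l).
  move=> l; have [c [hc _]] := hI l x u.
  by rewrite /cs /Bs hc ffunE eqxx.
have csn : forall l, cs l < 0.
  move=> l; have [c [hc cn]] := hI l x u.
  by rewrite /cs /Bs hc ffunE eqxx.
have cs0 : forall l, cs l != 0 by move=> l; rewrite ltr0_neq0.
have coo : forall l l', exists bt, gmul (Bs l) (Bs l') = gscale (sg R bt) (gmul (Bs l') (Bs l)).
  move=> l l'; case: (hcoorth l l' x u) => h.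
    by exists false; rewrite /sg /= expr0 scale1g.
  by exists true; rewrite /sg /= expr1 scaleN1g.
have eA : A = \sum_(j : {ffun 'I_d -> bool}) Pf R p q d Bs j (enum 'I_d) A.
  by rewrite (@Pf_sum _ _ _ _ _ _ BBs cs0) ?enum_uniq // size_enum_ord subnn expn0 scale1g.
rewrite {1}eA gmul_sumr; apply: eq_bigr => j _.
rewrite /gprod; apply: push => l.
have hr := @Pf_rel _ _ _ _ _ _ BBs cs0 coo j (enum 'I_d) A pred0 (fun l (h : pred0 l) => False_ind _ (notF h)) l.
rewrite mem_enum in hr.
exact: (@swap _ _ _ _ _ _ _ _ (BBs l) (csn l) (hr isT)).
Qed.
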